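(* Let $h=\prod_{i=1}^{t}p_i^{s_i}$ with distinct primes $p_i$, $s_i\ge1$, and let $1\leq r\leq m\leq n$. The independence number, clique number and chromatic number of $\mathrm{Bil}_r(\mathbb{Z}_h^{m\times n})$ are $$\alpha=h^{n(m-r)},\qquad\omega=h^{nr},\qquad\chi=h^{nr}.$$
   Context: $\mathbb{Z}_h$ is the residue class ring modulo $h$. The inner rank $\rho(A)$ of a nonzero $A\in\mathbb{Z}_h^{m\times n}$ is the least $r$ with $A=BC$, $B\in\mathbb{Z}_h^{m\times r}$, $C\in\mathbb{Z}_h^{r\times n}$; $\rho(0)=0$. $\mathrm{Bil}_r(\mathbb{Z}_h^{m\times n})$ is the graph with vertex set $\mathbb{Z}_h^{m\times n}$ in which distinct $A,B$ are adjacent iff $\rho(A-B)\leq r$. *)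

(* Defs.v *)
From HB Require Import structures.
From mathcomp Require Import all_boot all_order all_algebra.
Set Implicit Arguments. Unset Strict Implicit. Unset Printing Implicit Defensive.
Import GRing.Theory.
Local Open Scope ring_scope.

Definition factors_through (h m n : nat) (A : 'M['Z_h]_(m, n)) (r : nat) : bool :=
  [exists B : 'M['Z_h]_(m, r), exists C : 'M['Z_h]_(r, n), A == B *m C].

Lemma factors_through_ex (h m n : nat) (A : 'M['Z_h]_(m, n)) :
  exists r, factors_through A r.
Proof.
exists m; apply/existsP; exists 1%:M; apply/existsP; exists A.
by rewrite mul1mx.
Qed.

(* inner rank: least r with A = B C, B : m x r, C : r x n
   (for A = 0 this is 0, via the empty factorization). *)
Definition inner_rank (h m n : nat) (A : 'M['Z_h]_(m, n)) : nat :=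
  ex_minn (factors_through_ex A).

Definition bil_adj (h m n r : nat) : rel 'M['Z_h]_(m, n) :=
  fun A B => (A != B) && (inner_rank (A - B) <= r)%N.

Definition independent_set (T : finType) (e : rel T) (S : {set T}) : bool :=
  [forall x in S, forall y in S, ~~ e x y].

Definition clique (T : finType) (e : rel T) (S : {set T}) : bool :=
  [forall x in S, forall y in S, (x != y) ==> e x y].

Definition independence_number (T : finType) (e : rel T) : nat :=
  (\max_(S : {set T} | independent_set e S) #|S|)%N.

Definition clique_number (T : finType) (e : rel T) : nat :=
  (\max_(S : {set T} | clique e S) #|S|)%N.

Definition colorable (T : finType) (e : rel T) (k : nat) : bool :=
  [exists f : {ffun T -> 'I_k}, forall x, forall y, e x y ==> (f x != f y)].

Lemma colorable_ex (T : finType) (e : rel T) (irr : irreflexive e) :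
  exists k, colorable e k.
Proof.
exists #|T|; apply/existsP; exists [ffun x => enum_rank x].
apply/forallP => x; apply/forallP => y; apply/implyP => exy.
rewrite !ffunE; apply/negP => /eqP /enum_rank_inj Exy.
by move: exy; rewrite Exy irr.
Qed.

Lemma bil_adj_irr (h m n r : nat) : irreflexive (@bil_adj h m n r).
Proof. by move=> A; rewrite /bil_adj eqxx. Qed.

Definition chromatic_number (T : finType) (e : rel T) (irr : irreflexive e) : nat :=
  ex_minn (colorable_ex irr).

(* Main.v *)
Require Import Defs.
From HB Require Import structures.
From mathcomp Require Import all_boot all_order all_algebra all_fingroup all_field.
From mathcomp Require Import zify ring.
Set Implicit Arguments. Unset Strict Implicit. Unset Printing Implicit Defensive.
Import GRing.Theory.
Local Open Scope ring_scope.

Lemma card_fibers (T U : finZmodType) (f : T -> U)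
  (fB : forall x y, f (x - y) = f x - f y) (A : {set T})
  (A0 : 0 \in A) (AB : forall x y, x \in A -> y \in A -> x - y \in A)
  (Ak : forall x, f x = 0 -> x \in A) :
  #|A| = (#|f @: A| * #|[set x | f x == 0%R]|)%N.
Proof.
have f0 : f 0 = 0.
  by have := fB 0 0; rewrite !subrr.
have fN : forall y, f (- y) = - f y.
  by move=> y; rewrite -sub0r fB f0 sub0r.
have fD : forall x y, f (x + y) = f x + f y.
  by move=> x y; rewrite -{1}[y]opprK fB fN opprK.
rewrite -sum1_card (partition_big_imset f) /=.
rewrite -sum_nat_const; apply: eq_bigr => u /imsetP [x0 Ax0 ->].
rewrite sum1dep_card.
rewrite -[in RHS](card_imset _ (addrI x0)).
apply: eq_card => z; rewrite !inE.
apply/andP/imsetP.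
  move=> [Az /eqP fz]; exists (z - x0); first by rewrite inE fB fz subrr.
  by rewrite addrC subrK.
move=> [w]; rewrite inE => /eqP fw ->; split; last by rewrite fD fw addr0.
have Aw : w \in A by apply: Ak.
by rewrite -[w]opprK -[- w]sub0r AB // AB.
Qed.

Section Zh.
Variable h : nat.
Hypothesis h_gt1 : (1 < h)%N.

Lemma cardZh : #|'Z_h| = h.
Proof. by rewrite card_ord Zp_cast. Qed.

Lemma Zh_eq0 k : ((k%:R : 'Z_h) == 0) = (h %| k)%N.
Proof.
apply/eqP/idP => [H | H].
  by have := val_Zp_nat h_gt1 k; rewrite H /= => /esym /eqP.
by apply/val_inj; rewrite /= val_Zp_nat // (eqP H).
Qed.

Lemma Zh_lt (x : 'Z_h) : (x < h)%N.
Proof. by rewrite -[h in (_ < h)%N]Zp_cast. Qed.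

Lemma mulmxMnl a b c (A : 'M['Z_h]_(a, b)) (C : 'M['Z_h]_(b, c)) k :
  (A *+ k) *m C = (A *m C) *+ k.
Proof. by rewrite -!scaler_nat -scalemxAl. Qed.

Lemma mulmxMnr a b c (A : 'M['Z_h]_(a, b)) (C : 'M['Z_h]_(b, c)) k :
  A *m (C *+ k) = (A *m C) *+ k.
Proof. by rewrite -!scaler_nat -scalemxAr. Qed.

Lemma count_fact p rho m n (B : 'M['Z_h]_(m, rho)) (C : 'M['Z_h]_(rho, n)) :
  prime p -> (p %| h)%N -> (B *m C) *+ p = 0 ->
  (#|[set y *m (B *m C) | y : 'rV['Z_h]_m]| <= p ^ rho)%N.
Proof.
move=> pr_p ph BC0.
pose phi (z : 'rV['Z_h]_rho) := z *m C.
pose psi (z : 'rV['Z_h]_rho) := (z *m C) *+ p.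
have phiB x y : phi (x - y) = phi x - phi y by rewrite /phi mulmxBl.
have psiB x y : psi (x - y) = psi x - psi y by rewrite /psi mulmxBl mulrnBl.
pose K := [set z | psi z == 0].
have K0 : 0 \in K by rewrite inE /psi mul0mx mul0rn.
have KB x y : x \in K -> y \in K -> x - y \in K.
  by rewrite !inE psiB => /eqP -> /eqP ->; rewrite subrr.
have Kk x : phi x = 0 -> x \in K by rewrite inE /psi /phi => ->; rewrite mul0rn.
have HK := card_fibers phiB K0 KB Kk.
have HT := @card_fibers _ _ phi phiB setT (in_setT _) (fun _ _ _ _ => in_setT _)
   (fun _ _ => in_setT _).
have HP := @card_fibers _ _ psi psiB setT (in_setT _) (fun _ _ _ _ => in_setT _)
   (fun _ _ => in_setT _).
have Hsub : [set y *m (B *m C) | y : 'rV['Z_h]_m] \subset phi @: K.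
  apply/subsetP => x /imsetP [y _ ->]; apply/imsetP; exists (y *m B).
    by rewrite inE /psi -mulmxA -mulmxMnr BC0 mulmx0.
  by rewrite /phi mulmxA.
pose lam (w : 'F_p) : 'Z_h := (w : nat)%:R.
pose g (wx : 'rV['F_p]_rho * 'rV['Z_h]_n) := phi (map_mx lam wx.1) + wx.2.
have H4 : phi @: setT \subset g @: setX [set: 'rV['F_p]_rho] (psi @: setT).
  apply/subsetP => x /imsetP [z _ ->]; apply/imsetP.
  exists (map_mx (fun x : 'Z_h => ((x : nat)%:R : 'F_p)) z,
          psi (map_mx (fun x : 'Z_h => ((x : nat) %/ p)%:R) z)).
    by rewrite inE /= in_setT; apply/imsetP; exists (map_mx (fun x : 'Z_h => ((x : nat) %/ p)%:R) z).
  rewrite /g /= /psi /phi -mulmxMnl -mulmxDl; congr (_ *m _).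
  apply/matrixP => i j; rewrite -scaler_nat !mxE /lam val_Fp_nat // mulrC -natrM -natrD.
  by rewrite addnC -divn_eq natr_Zp.
have H4c : (#|phi @: setT| <= p ^ rho * #|psi @: setT|)%N.
  apply: leq_trans (subset_leq_card H4) _; apply: leq_trans (leq_imset_card _ _) _.
  by rewrite cardsX cardsT card_mx card_Fp // mul1n.
have := subset_leq_card Hsub; move/leq_trans; apply.
set a := #|phi @: K|; set k1 := #|[set x | phi x == 0]|.
set b := #|psi @: setT|; set c := #|phi @: setT|.
have k1p : (0 < k1)%N by apply/card_gt0P; exists 0; rewrite inE /phi mul0mx.
have bp : (0 < b)%N by apply/card_gt0P; exists (psi 0); apply: imset_f; exact: in_setT.
have E1 : (#|K| * b = c * k1)%N by rewrite mulnC -HP -HT.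
have kb : (0 < k1 * b)%N by rewrite muln_gt0 k1p bp.
rewrite -(leq_pmul2r kb) mulnA -HK E1.
by rewrite [(k1 * b)%N]mulnC mulnA leq_pmul2r.
Qed.

End Zh.

Section Addf.
Variables (U V : zmodType) (f : U -> V).
Hypothesis fD : forall x y, f (x + y) = f x + f y.
Lemma addf0 : f 0 = 0.
Proof. by have := fD 0 0; rewrite addr0 => /eqP; rewrite -subr_eq subrr eq_sym => /eqP. Qed.
Lemma addf_sum I (r : seq I) (P : pred I) F :
  f (\sum_(i <- r | P i) F i) = \sum_(i <- r | P i) f (F i).
Proof. exact: (big_morph f fD addf0). Qed.
Lemma addf_mulrn x k : f (x *+ k) = f x *+ k.
Proof. by elim: k => [|k IH]; rewrite ?mulr0n ?addf0 // !mulrS fD IH. Qed.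
End Addf.

Section FieldCode.
Variables (p : nat) (F : finFieldType).
Hypothesis pcharF : p \in [pchar F].
Variables (n : nat) (coord : F -> 'rV['F_p]_n) (uncoord : 'rV['F_p]_n -> F).
Hypothesis coordD : forall x y, coord (x + y) = coord x + coord y.
Hypothesis uncoordD : forall x y, uncoord (x + y) = uncoord x + uncoord y.
Hypothesis coordK : cancel coord uncoord.
Hypothesis uncoordK : cancel uncoord coord.

Let pr_p : prime p := pcharf_prime pcharF.

Lemma frobD i (x y : F) : (x + y) ^+ (p ^ i) = x ^+ (p ^ i) + y ^+ (p ^ i).
Proof.
elim: i => [|i IH]; first by rewrite !expr1.
by rewrite expnSr !exprM IH -!(pFrobenius_autE pcharF) rmorphD.
Qed.

Variables (k m : nat).
Hypothesis mn : (m <= n)%N.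
Hypothesis km : (k <= m)%N.

Definition cf (a : 'M['F_p]_(k, n)) (i : 'I_k) : F := uncoord (\row_l a i l).
Definition fa (a : 'M['F_p]_(k, n)) (x : F) : F := \sum_(i < k) cf a i * x ^+ (p ^ i).
Definition gj (j : 'I_m) : F := uncoord (delta_mx 0 (widen_ord mn j)).
Definition Phi0 (a : 'M['F_p]_(k, n)) : 'M['F_p]_(m, n) :=
  \matrix_(j, l) coord (fa a (gj j)) 0 l.

Lemma cfD a b i : cf (a + b) i = cf a i + cf b i.
Proof.
rewrite /cf -uncoordD; congr uncoord; by apply/rowP => l; rewrite !mxE.
Qed.

Lemma faD a x y : fa a (x + y) = fa a x + fa a y.
Proof. by rewrite /fa -big_split /=; apply: eq_bigr => i _; rewrite frobD mulrDr. Qed.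

Lemma fa_add a b x : fa (a + b) x = fa a x + fa b x.
Proof. by rewrite /fa -big_split /=; apply: eq_bigr => i _; rewrite cfD mulrDl. Qed.

Lemma Phi0D a b : Phi0 (a + b) = Phi0 a + Phi0 b.
Proof. by apply/matrixP => j l; rewrite !mxE fa_add coordD mxE. Qed.

Lemma FpE (c : 'F_p) : ((c : nat)%:R : 'F_p) = c.
Proof. exact: natr_Zp. Qed.

Definition Gy (y : 'rV['F_p]_m) : F :=
  uncoord (\sum_j y 0 j *: delta_mx 0 (widen_ord mn j)).

Lemma Gy_inj : injective Gy.
Proof.
move=> y y' /(can_inj uncoordK) => E; apply/rowP => j.
have := congr1 (fun M : 'rV_n => M 0 (widen_ord mn j)) E.
rewrite !summxE /= (bigD1 j) //= [in RHS](bigD1 j) //= !mxE !eqxx !mulr1.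
rewrite !big1 ?addr0 // => j' /negbTE nj; rewrite !mxE /=;
  have -> : (widen_ord mn j == widen_ord mn j') = false; try by rewrite mulr0.
  by apply/negbTE; apply: contraFN nj => /eqP [] /val_inj ->.
by apply/negbTE; apply: contraFN nj => /eqP [] /val_inj ->.
Qed.

Lemma mulPhi0 a (y : 'rV['F_p]_m) : y *m Phi0 a = coord (fa a (Gy y)).
Proof.
have fam := addf_mulrn (faD a).
have com := addf_mulrn coordD.
have ucm := addf_mulrn uncoordD.
rewrite /Gy (addf_sum uncoordD) (addf_sum (faD a)) (addf_sum coordD).
apply/rowP => l; rewrite !mxE summxE; apply: eq_bigr => j _.
by rewrite !mxE -[y 0 j]FpE scaler_nat ucm fam com -scaler_nat mxE.
Qed.

Definition Pa (a : 'M['F_p]_(k, n)) : {poly F} := \sum_(i < k) cf a i *: 'X^(p ^ i).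

Lemma Pa_coef a j : (Pa a)`_j = \sum_(i < k) cf a i * (j == (p ^ i)%N)%:R.
Proof. by rewrite /Pa coef_sum; apply: eq_bigr => i _; rewrite coefZ coefXn. Qed.

Lemma Pa_horner a x : (Pa a).[x] = fa a x.
Proof. by rewrite /Pa horner_sum; apply: eq_bigr => i _; rewrite hornerZ hornerXn. Qed.

Lemma uncoord0 : uncoord 0 = 0.
Proof. exact: addf0 uncoordD. Qed.

Lemma Pa_neq0 a : a != 0 -> Pa a != 0.
Proof.
move=> a0; have [i ai] : exists i, cf a i != 0.
  apply/existsP; apply: contraR a0 => /existsPn H; apply/eqP/matrixP => i l.
  have := H i; rewrite negbK -uncoord0 => /eqP /(can_inj uncoordK) /rowP /(_ l).
  by rewrite !mxE.
apply/eqP => /(congr1 (fun P : {poly F} => P`_(p ^ i))).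
rewrite Pa_coef coef0 (bigD1 i) //= eqxx mulr1 big1 ?addr0 => [|i' ni].
  by apply/eqP.
rewrite (_ : (p ^ i == p ^ i')%N = false) ?mulr0 //.
by apply/negbTE; apply: contra ni => /eqP /(expnI (prime_gt1 pr_p)) E; apply/eqP/val_inj.
Qed.

Lemma Pa_size a : (0 < k)%N -> (size (Pa a) <= (p ^ k.-1).+1)%N.
Proof.
move=> k0; apply/leq_sizeP => j hj; rewrite Pa_coef big1 // => i _.
rewrite (_ : (j == p ^ i)%N = false) ?mulr0 //; apply/negbTE.
rewrite neq_ltn; apply/orP; right; apply: leq_trans hj.
by rewrite ltnS leq_exp2l ?prime_gt1 // -ltnS prednK.
Qed.

Lemma Phi0_count a : a != 0 ->
  (p ^ (m - k + 1) <= #|[set y *m Phi0 a | y : 'rV['F_p]_m]|)%N.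
Proof.
move=> a0.
have k0 : (0 < k)%N.
  by case: k a a0 => // a; rewrite flatmx0 eqxx.
pose f (y : 'rV['F_p]_m) := y *m Phi0 a.
have fB x y : f (x - y) = f x - f y by rewrite /f mulmxBl.
have := @card_fibers _ _ f fB setT (in_setT _) (fun _ _ _ _ => in_setT _)
   (fun _ _ => in_setT _).
rewrite cardsT card_mx card_Fp // mul1n.
set I := #|_|; set Kc := #|_| => E.
have HK : (Kc <= p ^ k.-1)%N.
  pose rs := enum [set x | root (Pa a) x].
  have := max_poly_roots (Pa_neq0 a0) (_ : all (root (Pa a)) rs) (enum_uniq _).
  rewrite -cardE => /(_ _) H.
  have {}H : (#|[set x | root (Pa a) x]| <= p ^ k.-1)%N.
    rewrite -ltnS; apply: leq_trans (Pa_size a k0); apply: H.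
    by apply/allP => x; rewrite mem_enum inE.
  apply: leq_trans H; rewrite /Kc -(card_imset _ Gy_inj); apply: subset_leq_card.
  apply/subsetP => x /imsetP [y]; rewrite !inE => /eqP Hy ->.
  move: Hy; rewrite /f /= mulPhi0 => Hy.
  rewrite /root Pa_horner.
  by move: Hy; rewrite -(addf0 coordD) => /(can_inj coordK) ->.
have : (p ^ (m - k + 1) * p ^ k.-1 <= I * p ^ k.-1)%N.
  rewrite -expnD (_ : (m - k + 1 + k.-1 = m)%N); last by lia.
  by rewrite E leq_mul2l HK orbT.
rewrite leq_pmul2r ?expn_gt0 ?prime_gt0 // => H; apply: leq_trans H _.
by apply: subset_leq_card; apply/subsetP => x /imsetP [y _ ->]; apply: imset_f.
Qed.

End FieldCode.

Import VectorInternalTheory.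

Lemma field_code (p k m n : nat) : prime p -> (k <= m)%N -> (m <= n)%N ->
  exists Phi : {ffun 'M['F_p]_(k, n) -> 'M['F_p]_(m, n)},
    (forall a b, Phi (a + b) = Phi a + Phi b) /\
    (forall a, a != 0 ->
       (p ^ (m - k + 1) <= #|[set y *m Phi a | y : 'rV['F_p]_m]|)%N).
Proof.
move=> pr_p; case: k => [|k] km mn.
  exists [ffun _ => 0]; split; first by move=> a b; rewrite !ffunE addr0.
  by move=> a; rewrite flatmx0 eqxx.
have n_gt0 : (0 < n)%N by apply: leq_trans mn; apply: leq_trans km.
have [F pcharF cardF] := @pPrimePowerField p n pr_p n_gt0.
pose R := pPrimeCharType pcharF.
have Hd : dim R = n.
  rewrite -dimvf (pprimeChar_dimf pcharF).
  by rewrite (_ : #|R| = #|F|) // cardF pfactorK.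
have mn' : (m <= dim R)%N by rewrite Hd.
suff : exists Phi : {ffun 'M['F_p]_(k.+1, dim R) -> 'M['F_p]_(m, dim R)},
    (forall a b, Phi (a + b) = Phi a + Phi b) /\
    (forall a, a != 0 ->
       (p ^ (m - k.+1 + 1) <= #|[set y *m Phi a | y : 'rV['F_p]_m]|)%N).
  by rewrite Hd.
pose coord (x : F) : 'rV['F_p]_(dim R) := v2r (x : R).
pose uncoord (v : 'rV['F_p]_(dim R)) : F := (r2v v : R).
have coordD x y : coord (x + y) = coord x + coord y by rewrite /coord linearD.
have uncoordD x y : uncoord (x + y) = uncoord x + uncoord y by rewrite /uncoord linearD.
have coordK : cancel coord uncoord by move=> x; rewrite /coord /uncoord v2rK.
have uncoordK : cancel uncoord coord by move=> x; rewrite /coord /uncoord r2vK.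
exists [ffun a => Phi0 coord uncoord mn' a]; split.
  by move=> a b; rewrite !ffunE Phi0D.
move=> a a0; rewrite ffunE.
exact: (Phi0_count pcharF coordD uncoordD coordK uncoordK mn' km a0).
Qed.

Section Key.
Variable h : nat.
Hypothesis h_gt1 : (1 < h)%N.

Lemma Zh_mulrn (x : 'Z_h) t : x *+ t = ((x : nat) * t)%:R.
Proof. by rewrite natrM natr_Zp mulr_natr. Qed.

Lemma mx_mulrn_entry a b (M : 'M['Z_h]_(a, b)) t i j : (M *+ t) i j = M i j *+ t.
Proof. by rewrite -scaler_nat mxE mulr_natl. Qed.

Lemma ord_arg k n (a : 'M['Z_h]_(k, n)) : a != 0 ->
  exists p u (v : 'M['F_p]_(k, n)), [/\ prime p, (p %| h)%N, v != 0 &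
    a *+ u = \matrix_(i, t) ((h %/ p) * (v i t : nat))%:R].
Proof.
move=> a0.
have ah : a *+ h = 0.
  apply/matrixP => i t; rewrite mx_mulrn_entry mxE Zh_mulrn.
  by apply/eqP; rewrite Zh_eq0 // dvdn_mull.
have exP : exists d, (0 < d)%N && (a *+ d == 0) by exists h; rewrite ah eqxx andbT ltnW.
case: (ex_minnP exP) => d /andP [d0 /eqP ad] dmin.
have dh : (d %| h)%N.
  have e : a *+ (h %% d) = 0.
    by move: ah; rewrite [X in a *+ X](divn_eq h d) mulrnDr [(_ %/ _ * _)%N]mulnC mulrnA ad mul0rn add0r.
  rewrite /dvdn; case: posnP => // hd0.
  by have := dmin _ (introT andP (conj hd0 (introT eqP e))); rewrite leqNgt ltn_pmod.
have d1 : (1 < d)%N.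
  rewrite ltn_neqAle d0 andbT; apply: contra a0 => /eqP d1.
  by rewrite -[a]mulr1n d1 ad.
pose p := pdiv d.
have pr_p : prime p by exact: pdiv_prime.
have pd : (p %| d)%N by exact: pdiv_dvd.
have ph : (p %| h)%N by exact: dvdn_trans dh.
pose u := (d %/ p)%N.
have u0 : (0 < u)%N by rewrite /u divn_gt0 ?prime_gt0 // dvdn_leq.
have ud : (u < d)%N by rewrite /u ltn_Pdiv // prime_gt1.
have au0 : a *+ u != 0.
  by apply/negP => /eqP e; have := dmin _ (introT andP (conj u0 (introT eqP e))); rewrite leqNgt ud.
have aup : (a *+ u) *+ p = 0 by rewrite -mulrnA /u divnK.
have hp0 : (0 < h %/ p)%N by rewrite divn_gt0 ?prime_gt0 // dvdn_leq // ltnW.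
have hpE : (h %/ p * p = h)%N by rewrite divnK.
pose v : 'M['F_p]_(k, n) := \matrix_(i, t) (((a *+ u) i t : nat) %/ (h %/ p))%:R.
have entry i t : (a *+ u) i t = ((h %/ p) * (v i t : nat))%:R.
  pose x := (a *+ u) i t.
  have xp : x *+ p = 0 by rewrite /x -mx_mulrn_entry aup mxE.
  move: xp; rewrite Zh_mulrn => /eqP; rewrite Zh_eq0 // -{1}hpE dvdn_pmul2r ?prime_gt0 // => hx.
  rewrite mxE val_Fp_nat // modn_small; last first.
    by rewrite ltn_divLR // mulnC hpE Zh_lt.
  by rewrite mulnC divnK // natr_Zp.
exists p, u, v; split => //.
  apply: contra au0 => /eqP v0; apply/eqP/matrixP => i t.
  by rewrite entry v0 mxE muln0 mxE.
by apply/matrixP => i t; rewrite entry [in RHS]mxE.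
Qed.

End Key.

Definition goodF p k m n (Phi : {ffun 'M['F_p]_(k, n) -> 'M['F_p]_(m, n)}) : bool :=
  [forall a, forall b, Phi (a + b) == Phi a + Phi b] &&
  [forall a, (a != 0) ==>
     (p ^ (m - k + 1) <= #|[set y *m Phi a | y : 'rV['F_p]_m]|)%N].

Definition PhiF p k m n : {ffun 'M['F_p]_(k, n) -> 'M['F_p]_(m, n)} :=
  odflt [ffun _ => 0] [pick Phi | goodF Phi].

Lemma PhiF_good p k m n : prime p -> (k <= m)%N -> (m <= n)%N -> goodF (PhiF p k m n).
Proof.
move=> pr_p km mn; rewrite /PhiF; case: pickP => [Phi -> //| H].
have [Phi [HD HC]] := field_code pr_p km mn.
have := H Phi; rewrite /goodF.
have -> : [forall a, forall b, Phi (a + b) == Phi a + Phi b].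
  by apply/forallP => a; apply/forallP => b; rewrite HD.
have -> // : [forall a, (a != 0) ==>
     (p ^ (m - k + 1) <= #|[set y *m Phi a | y : 'rV['F_p]_m]|)%N].
by apply/forallP => a; apply/implyP; apply: HC.
Qed.

Lemma PhiF_D p k m n : prime p -> (k <= m)%N -> (m <= n)%N ->
  forall a b, PhiF p k m n (a + b) = PhiF p k m n a + PhiF p k m n b.
Proof.
move=> pr_p km mn a b; have /andP [/forallP H _] := PhiF_good pr_p km mn.
by apply/eqP; have /forallP := H a; apply.
Qed.

Lemma PhiF_C p k m n : prime p -> (k <= m)%N -> (m <= n)%N ->
  forall a, a != 0 ->
  (p ^ (m - k + 1) <= #|[set y *m PhiF p k m n a | y : 'rV['F_p]_m]|)%N.
Proof.
move=> pr_p km mn a a0; have /andP [_ /forallP H] := PhiF_good pr_p km mn.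
by have /implyP := H a; apply.
Qed.

Definition Wq (h q : nat) : nat := \prod_(q' <- primes h | q' != q) q'.

Definition coefH h k m n (j : 'I_m) (l : 'I_n) (i : 'I_k) (t : 'I_n) : 'Z_h :=
  (\sum_(q <- primes h) Wq h q * (PhiF q k m n (delta_mx i t) j l : nat))%:R.

Definition PhiH h k m n (a : 'M['Z_h]_(k, n)) : 'M['Z_h]_(m, n) :=
  \matrix_(j, l) \sum_i \sum_t a i t * @coefH h k m n j l i t.

Lemma PhiH_D h k m n (a b : 'M['Z_h]_(k, n)) : PhiH m (a + b) = PhiH m a + PhiH m b.
Proof.
apply/matrixP => j l; rewrite !mxE -big_split; apply: eq_bigr => i _.
rewrite -big_split; apply: eq_bigr => t _; by rewrite mxE mulrDl.
Qed.

Section Mod.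
Variable h : nat.
Hypothesis h_gt1 : (1 < h)%N.
Variable p : nat.
Hypothesis pr_p : prime p.
Hypothesis ph : (p %| h)%N.

Lemma Emod c z : ((h %/ p) * c * (z %% p))%:R = ((h %/ p) * c * z)%:R :> 'Z_h.
Proof.
rewrite [in RHS](divn_eq z p) mulnDr natrD.
rewrite [X in _ = X + _](_ : _ = 0) ?add0r //; apply/eqP; rewrite Zh_eq0 //.
rewrite (_ : (h %/ p * c * (z %/ p * p) = (h %/ p * p) * (c * (z %/ p)))%N); last by ring.
by rewrite divnK // dvdn_mulr.
Qed.

Lemma Wq_dvd q : q \in primes h -> q != p -> (p %| Wq h q)%N.
Proof.
move=> qh qp; have pi : p \in primes h by rewrite mem_primes pr_p ph ltnW.
rewrite /Wq -big_filter (bigD1_seq p) ?filter_uniq ?primes_uniq //=.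
  exact: dvdn_mulr.
by rewrite mem_filter pi eq_sym qp.
Qed.

Lemma Wq_coprime : coprime p (Wq h p).
Proof.
rewrite /Wq big_seq_cond; elim/big_ind: _ => [|x y|q /andP[]]; first by rewrite coprimen1.
  by rewrite coprimeMr => -> ->.
rewrite mem_primes => /and3P [pq _ _] qp.
by rewrite prime_coprime // dvdn_prime2 // eq_sym.
Qed.

Lemma PhiH_mod k m n (km : (k <= m)%N) (mn : (m <= n)%N) (v : 'M['F_p]_(k, n)) :
  PhiH m (\matrix_(i, t) ((h %/ p) * (v i t : nat))%:R : 'M['Z_h]_(k, n)) =
  \matrix_(j, l) ((h %/ p) * Wq h p * (PhiF p k m n v j l : nat))%:R.
Proof.
have pi : p \in primes h by rewrite mem_primes pr_p ph ltnW.
apply/matrixP => j l; rewrite !mxE.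
have step1 i t : ((h %/ p) * (v i t : nat))%:R * @coefH h k m n j l i t =
   ((h %/ p) * Wq h p * ((v i t : nat) * (PhiF p k m n (delta_mx i t) j l : nat)))%:R.
  rewrite /coefH -natrM big_distrr /= natr_sum.
  rewrite (bigD1_seq p) ?primes_uniq //= big_seq_cond big1 ?addr0.
    by congr (_%:R); ring.
  move=> q /andP [qh qp]; apply/eqP; rewrite Zh_eq0 //.
  have [w ->] : exists w, Wq h q = (w * p)%N.
    by exists (Wq h q %/ p)%N; rewrite divnK // Wq_dvd.
  rewrite -[h in (h %| _)%N](divnK ph); apply: dvdn_mul; first exact: dvdn_mulr.
  by rewrite mulnAC dvdn_mull.
transitivity (((h %/ p) * Wq h p * (\sum_i \sum_t
     (v i t : nat) * (PhiF p k m n (delta_mx i t) j l : nat)))%:R : 'Z_h).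
  rewrite big_distrr natr_sum; apply: eq_bigr => i _; rewrite big_distrr natr_sum.
  apply: eq_bigr => t _; rewrite mxE; exact: step1.
rewrite -Emod; congr (_ %:R); congr (_ * _)%N; rewrite -val_Fp_nat //; congr (nat_of_ord _).
have PD := PhiF_D pr_p km mn.
rewrite natr_sum [in RHS](matrix_sum_delta v) (addf_sum PD) summxE.
apply: eq_bigr => i _; rewrite natr_sum (addf_sum PD) summxE; apply: eq_bigr => t _.
rewrite natrM !natr_Zp -{2}[v i t]natr_Zp scaler_nat (addf_mulrn PD) -scaler_nat mxE.
by rewrite natr_Zp.
Qed.

End Mod.

Section Key2.
Variable h : nat.
Hypothesis h_gt1 : (1 < h)%N.
Variable p : nat.
Hypothesis pr_p : prime p.
Hypothesis ph : (p %| h)%N.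

Lemma nu_inj c a b : coprime p c -> (a < p)%N -> (b < p)%N ->
  ((h %/ p) * c * a)%:R = ((h %/ p) * c * b)%:R :> 'Z_h -> a = b.
Proof.
move=> cp; wlog: a b / (a <= b)%N => [H ap bp E|ab ap bp].
  by case: (leqP a b) => [ab|/ltnW ba]; [exact: H | exact/esym/H].
move=> /(congr1 (@nat_of_ord _)); rewrite !val_Zp_nat // => /eqP.
rewrite eq_sym eqn_mod_dvd; last by rewrite leq_mul2l ab orbT.
rewrite -mulnBr -[h in (h %| _)%N](divnK ph) -mulnA dvdn_pmul2l; last first.
  by rewrite divn_gt0 ?prime_gt0 // dvdn_leq // ltnW.
rewrite Gauss_dvdr // => pd.
apply/eqP; rewrite eqn_leq ab /= -subn_eq0; apply/eqP.
apply/eqP; apply: contraTT pd => nz; rewrite gtnNdvd // ?lt0n //.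
by apply: leq_ltn_trans (leq_subr _ _) bp.
Qed.

End Key2.

Lemma key h k m n r : (1 < h)%N -> (k <= m)%N -> (m <= n)%N -> r = (m - k)%N ->
  forall a : 'M['Z_h]_(k, n), a != 0 -> (r < inner_rank (PhiH m a))%N.
Proof.
move=> h_gt1 km mn -> a a0; rewrite ltnNge; apply/negP.
rewrite /inner_rank; case: ex_minnP => rho /existsP [B /existsP [C /eqP HBC]] _ Hrho.
have [p [u [v [pr_p ph v0 Hu]]]] := ord_arg h_gt1 a0.
have Hb : PhiH m (a *+ u) = B *m (C *+ u).
  by rewrite (addf_mulrn (@PhiH_D h k m n)) HBC mulmxMnr.
rewrite Hu PhiH_mod // in Hb.
set X := PhiF p k m n v in Hb.
set M := \matrix_(j, l) _ in Hb.
have M0 : (B *m (C *+ u)) *+ p = 0.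
  rewrite -Hb; apply/matrixP => j l; rewrite mx_mulrn_entry // !mxE -mulrnA.
  apply/eqP; rewrite Zh_eq0 // -[h in (h %| _)%N](divnK ph).
  by apply: dvdn_mul => //; rewrite -mulnA dvdn_mulr.
have up := count_fact pr_p ph M0.
have lo := PhiF_C pr_p km mn v0.
rewrite -/X in lo.
pose nu (x : 'F_p) : 'Z_h := ((h %/ p) * Wq h p * (x : nat))%:R.
have nuI : injective (map_mx nu : 'rV['F_p]_n -> 'rV['Z_h]_n).
  move=> w w' E; apply/rowP => l; have := congr1 (fun W : 'rV['Z_h]_n => W 0 l) E; rewrite !mxE => E'.
  apply/val_inj; apply: (nu_inj h_gt1 pr_p ph (Wq_coprime h pr_p) _ _ E');
    by rewrite -[p in (_ < p)%N](Fp_cast pr_p) ltn_ord.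
have sub : map_mx nu @: [set y *m X | y : 'rV['F_p]_m] \subset
           [set y *m (B *m (C *+ u)) | y : 'rV['Z_h]_m].
  apply/subsetP => z /imsetP [w /imsetP [y _ ->] ->]; rewrite -Hb.
  apply/imsetP; exists (map_mx (fun x : 'F_p => ((x : nat)%:R : 'Z_h)) y) => //.
  apply/rowP => l; rewrite !mxE /nu.
  have e : (\sum_j y 0 j * X j l) = ((\sum_j (y 0%R j : nat) * (X j l : nat))%N%:R : 'F_p).
    by rewrite natr_sum; apply: eq_bigr => j _; rewrite natrM !natr_Zp.
  rewrite e val_Fp_nat // (Emod h_gt1 ph) big_distrr natr_sum.
  by apply: eq_bigr => j _; rewrite !mxE -natrM /= [in RHS]mulnCA.
have H : (p ^ (m - k + 1) <= p ^ rho)%N.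
  apply: leq_trans lo _; rewrite -(card_imset _ nuI).
  exact: leq_trans (subset_leq_card sub) up.
have : (p ^ (m - k + 1) <= p ^ (m - k))%N.
  by apply: leq_trans H _; rewrite leq_exp2l ?prime_gt1.
by rewrite leq_exp2l ?prime_gt1 // addn1 ltnn.
Qed.

Section Blocks.
Variables (R : nzRingType) (m n r : nat).
Hypothesis rm : (r <= m)%N.
Local Notation k := (m - r)%N.

Lemma bord_proof (i : 'I_r) : (k + i < m)%N.
Proof. have := ltn_ord i; lia. Qed.

Definition bord (i : 'I_r) : 'I_m := Ordinal (bord_proof i).
Definition tord (i : 'I_k) : 'I_m := widen_ord (leq_subr r m) i.

Definition topm (A : 'M[R]_(m, n)) : 'M[R]_(k, n) := \matrix_(i, l) A (tord i) l.
Definition botm (A : 'M[R]_(m, n)) : 'M[R]_(r, n) := \matrix_(i, l) A (bord i) l.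
Definition Bm : 'M[R]_(m, r) := \matrix_(j, i) ((j : nat) == k + i)%N%:R.

Lemma topmB A B : topm (A - B) = topm A - topm B.
Proof. by apply/matrixP => i l; rewrite !mxE. Qed.
Lemma botmB A B : botm (A - B) = botm A - botm B.
Proof. by apply/matrixP => i l; rewrite !mxE. Qed.

Lemma split_eq A B : topm A = topm B -> botm A = botm B -> A = B.
Proof.
move=> Et Eb; apply/matrixP => j l.
case: (ltnP j k) => jk.
  have := congr1 (fun M : 'M[R]_(k, n) => M (Ordinal jk) l) Et; rewrite !mxE.
  by rewrite (_ : tord _ = j) //; apply: val_inj.
have jr : (j - k < r)%N by have := ltn_ord j; lia.
have := congr1 (fun M : 'M[R]_(r, n) => M (Ordinal jr) l) Eb; rewrite !mxE.
by rewrite (_ : bord _ = j) //; apply: val_inj => /=; lia.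
Qed.

Lemma BmE_top (X : 'M[R]_(r, n)) (j : 'I_m) (l : 'I_n) : (j < k)%N -> (Bm *m X) j l = 0.
Proof.
move=> jk; rewrite !mxE big1 // => i _; rewrite mxE (_ : ((j : nat) == k + i)%N = false) ?mul0r //.
apply/negbTE; apply/eqP; lia.
Qed.

Lemma BmE_bot (X : 'M[R]_(r, n)) i l : (Bm *m X) (bord i) l = X i l.
Proof.
rewrite !mxE (bigD1 i) //= mxE eqxx mul1r big1 ?addr0 // => i' ni.
rewrite mxE (_ : (k + i == k + i')%N = false) ?mul0r //.
by apply/negbTE; rewrite eqn_add2l; apply: contra ni => /eqP e; apply/eqP/val_inj.
Qed.

Lemma topBm X : topm (Bm *m X) = 0.
Proof. by apply/matrixP => i l; rewrite mxE BmE_top ?mxE //= ltn_ord. Qed.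

Lemma botBm X : botm (Bm *m X) = X.
Proof. by apply/matrixP => i l; rewrite mxE BmE_bot. Qed.

Lemma topm0_eq A : topm A = 0 -> A = Bm *m botm A.
Proof. by move=> t0; apply: split_eq; rewrite ?topBm ?botBm. Qed.

End Blocks.

Theorem theorem3p4 (h m n r : nat) (h_gt1 : (1 < h)%N)
    (r_ge1 : (1 <= r)%N) (r_le_m : (r <= m)%N) (m_le_n : (m <= n)%N) :
  independence_number (@bil_adj h m n r) = (h ^ (n * (m - r)))%N /\
  clique_number (@bil_adj h m n r) = (h ^ (n * r))%N /\
  chromatic_number (@bil_adj_irr h m n r) = (h ^ (n * r))%N.
Proof.
have km : (m - r <= m)%N := leq_subr r m.
have rk : r = (m - (m - r))%N by rewrite subKn.
pose Phi := @PhiH h (m - r) m n.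
have PhiD a b : Phi (a + b) = Phi a + Phi b by exact: PhiH_D.
have PhiB a b : Phi (a - b) = Phi a - Phi b.
  by apply/eqP; rewrite eq_sym subr_eq -PhiD subrK.
have Pkey (a : 'M['Z_h]_(m - r, n)) : a != 0 -> (r < inner_rank (Phi a))%N.
  exact: key h_gt1 km m_le_n rk a.
have top_rank (A : 'M['Z_h]_(m, n)) : topm r A = 0 -> (inner_rank A <= r)%N.
  move=> t0; rewrite /inner_rank; case: ex_minnP => rho _ min; apply: min.
  apply/existsP; exists (Bm _ m r); apply/existsP; exists (botm r_le_m A).
  by apply/eqP; exact: topm0_eq.
pose tau a := topm r (Phi a).
have tau_inj : injective tau.
  move=> a b E; apply/eqP; rewrite -subr_eq0; apply: contraT => nz.
  have := Pkey _ nz; rewrite ltnNge top_rank //.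
  by rewrite PhiB topmB; apply/eqP; rewrite subr_eq0; apply/eqP.
have Phi_inj : injective Phi by move=> a b E; apply: tau_inj; rewrite /tau E.
pose tinv := invF tau_inj.
pose color (A : 'M['Z_h]_(m, n)) := botm r_le_m A - botm r_le_m (Phi (tinv (topm r A))).
have color_ok (A B : 'M['Z_h]_(m, n)) : bil_adj r A B -> color A != color B.
  case/andP => AB rAB; apply/negP => /eqP E.
  pose a := tinv (topm r A); pose b := tinv (topm r B).
  have Ea : A - Phi a = B - Phi b.
    apply: (@split_eq _ _ _ _ r_le_m).
      by rewrite !topmB -/(tau a) -/(tau b) /a /b /tinv !(f_invF tau_inj) !subrr.
    by rewrite !botmB.
  have EAB : A - B = Phi (a - b).
    by rewrite PhiB -[A](subrK (Phi a)) Ea addrAC [B - _ - B]addrAC subrr add0r addrC.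
  have [ab|ab] := eqVneq a b.
    by move: AB; rewrite -subr_eq0 EAB ab subrr (addf0 PhiD) eqxx.
  by move: rAB; rewrite EAB leqNgt Pkey // subr_eq0.
have cardM s t : #|{: 'M['Z_h]_(s, t)}| = (h ^ (s * t))%N.
  by rewrite card_mx cardZh.
pose K := [set A : 'M['Z_h]_(m, n) | topm r A == 0].
have Kclique : clique (@bil_adj h m n r) K.
  apply/forallP => x; apply/implyP => xK; apply/forallP => y; apply/implyP => yK.
  apply/implyP => xy; rewrite /bil_adj xy /= top_rank //.
  by move: xK yK; rewrite !inE topmB => /eqP -> /eqP ->; rewrite subrr.
have cardK : #|K| = (h ^ (n * r))%N.
  have -> : K = [set Bm _ m r *m X | X : 'M['Z_h]_(r, n)].
    apply/setP => A; rewrite inE; apply/eqP/imsetP => [t0|[X _ ->]].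
      by exists (botm r_le_m A) => //; apply: topm0_eq.
    exact: topBm.
  rewrite card_imset; last by move=> X Y E; rewrite -(botBm r_le_m X) E botBm.
  by rewrite cardM mulnC.
have CE : #|'M['Z_h]_(r, n)| = (h ^ (n * r))%N by rewrite cardM mulnC.
have colR : colorable (@bil_adj h m n r) (h ^ (n * r)).
  apply/existsP; exists [ffun A => cast_ord CE (enum_rank (color A))].
  apply/forallP => x; apply/forallP => y; apply/implyP => xy; rewrite !ffunE.
  apply: contra (color_ok _ _ xy) => /eqP /cast_ord_inj /enum_rank_inj ->.
  by [].
pose I0 := [set Phi a | a : 'M['Z_h]_(m - r, n)].
have I0ind : independent_set (@bil_adj h m n r) I0.
  apply/forallP => x; apply/implyP => /imsetP [a _ ->].
  apply/forallP => y; apply/implyP => /imsetP [b _ ->].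
  rewrite /bil_adj negb_and negbK -ltnNge -PhiB.
  have [ab|ab] := eqVneq a b; first by rewrite ab eqxx.
  by rewrite Pkey ?orbT // subr_eq0.
have cardI0 : #|I0| = (h ^ (n * (m - r)))%N.
  by rewrite card_imset // cardM mulnC.
split; last split.
- apply/eqP; rewrite eqn_leq; apply/andP; split; last first.
    by rewrite -cardI0; apply: leq_bigmax_cond.
  apply/bigmax_leqP => S Sind.
  have : (#|S| * #|K| <= h ^ (m * n))%N.
    rewrite -cardsX -cardM -(card_in_imset (f := fun xy => xy.1 + xy.2)).
      exact: max_card.
    move=> [x y] [x' y'] /setXP [xS yK] /setXP [x'S y'K] /= E.
    have xx' : x = x'.
      apply/eqP; move: Sind => /forallP /(_ x) /implyP /(_ xS) /forallP /(_ x').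
      move=> /implyP /(_ x'S); rewrite /bil_adj negb_and negbK => /orP [] // H.
      exfalso; move: H; rewrite top_rank // (_ : x - x' = y' - y); last first.
        have -> : x = x' + y' - y by rewrite -E addrK.
        by rewrite addrAC [x' + y' - x']addrAC subrr add0r.
      by move: yK y'K; rewrite !inE topmB => /eqP -> /eqP ->; rewrite subrr.
    by move: E; rewrite xx' => /addrI ->.
  rewrite cardK (_ : (m * n) = n * (m - r) + n * r)%N; last first.
    by rewrite -mulnDr subnK // mulnC.
  by rewrite expnD leq_pmul2r // expn_gt0 ltnW.
- apply/eqP; rewrite eqn_leq; apply/andP; split; last first.
    by rewrite -cardK; apply: leq_bigmax_cond.
  apply/bigmax_leqP => S Scl.
  rewrite -CE -(card_in_imset (f := color)); first exact: max_card.
  move=> x y xS yS E; apply/eqP; apply: contraT => xy.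
  have : bil_adj r x y.
    move: Scl => /forallP /(_ x) /implyP /(_ xS) /forallP /(_ y) /implyP /(_ yS).
    by move/implyP; apply.
  by move/color_ok; rewrite E eqxx.
- rewrite /chromatic_number; case: ex_minnP => c colc minc.
  apply/eqP; rewrite eqn_leq minc //= -cardK.
  move: colc => /existsP [f /forallP fP].
  rewrite -[c]card_ord -(card_in_imset (f := f)); first exact: max_card.
  move=> x y xK yK E; apply/eqP; apply: contraT => xy.
  have := Kclique; move=> /forallP /(_ x) /implyP /(_ xK) /forallP /(_ y) /implyP /(_ yK).
  move/implyP/(_ xy) => exy.
  by move: fP => /(_ x) /forallP /(_ y) /implyP /(_ exy); rewrite E eqxx.
Qed.
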